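(* Let $t\ge 1$ and $s\ge 3$ be integers with $s>(2^t+1)2^{t-1}$, and let $H_{t,s}=K_t\times C_s$. Then $H_{t,s}$ is $(t+1)$-regular, its edge connectivity is $t+1$, and $m(H_{t,s})\le 2^t$.
   Context: All graphs are finite and simple. $K_t$ is the complete graph on $t$ vertices and $C_s$ the cycle on $s$ vertices. The Cartesian product $H_1\times H_2$ of $H_1=(V_1,E_1)$ and $H_2=(V_2,E_2)$ has vertex set $V_1\times V_2$, with $(v_1,v_2)$ adjacent to $(u_1,u_2)$ iff either $v_1=u_1$ and $v_2u_2\in E_2$, or $v_2=u_2$ and $v_1u_1\in E_1$. The edge connectivity of a graph is the minimum number of edges whose removal disconnects it. For graphs $G_1=(V,E_1)$, $G_2=(V,E_2)$, their symmetric difference is $(V,E_1\oplus E_2)$. A connectivity code for $H=(V,E)$ is a collection of distinct spanning subgraphs $(V,E')$, $E'\subseteq E$, such that the symmetric difference of any two distinct members is a connected graph on $V$; $m(H)$ is the maximum cardinality of a connectivity code for $H$. *)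

(* Defs.v *)
(* Simple graphs on a finType V given by a symmetric,
   irreflexive adjacency relation; edges are 2-element vertex sets. *)
From mathcomp Require Import all_boot.
Set Implicit Arguments. Unset Strict Implicit. Unset Printing Implicit Defensive.

Section Graphs.
Variable V : finType.

Definition edges (adj : rel V) : {set {set V}} :=
  [set [set u.1; u.2] | u in [set u : V * V | adj u.1 u.2]].

Definition connectedE (F : {set {set V}}) : bool :=
  [forall x, forall y, connect (fun a b => [set a; b] \in F) x y].

Definition degree (adj : rel V) (x : V) : nat := #|[set y | adj x y]|.

Definition regular (adj : rel V) (k : nat) : Prop := forall x, degree adj x = k.

(* edge connectivity: minimum number of edges whose removal disconnects
   the graph (default #|E| if no removal disconnects it) *)
Definition edge_connectivity (adj : rel V) : nat :=
  \big[minn/#|edges adj|]_(F in powerset (edges adj) | ~~ connectedE (edges adj :\: F)) #|F|.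

(* a connectivity code: a set of spanning subgraphs (identified with their
   edge sets E' ⊆ E) whose pairwise symmetric differences are connected *)
Definition connectivity_code (adj : rel V) (C : {set {set {set V}}}) : bool :=
  [forall E1 in C, E1 \subset edges adj] &&
  [forall E1 in C, forall E2 in C,
     (E1 != E2) ==> connectedE ((E1 :\: E2) :|: (E2 :\: E1))].

Definition m_code (adj : rel V) : nat :=
  \max_(C : {set {set {set V}}} | connectivity_code adj C) #|C|.
End Graphs.

Definition K_adj (t : nat) : rel 'I_t := fun i j => i != j.
Arguments K_adj : clear implicits.

(* cycle C_s on 'I_s (meant for s >= 3) *)
Definition C_adj (s : nat) : rel 'I_s :=
  fun i j => (val j == (val i).+1 %% s) || (val i == (val j).+1 %% s).
Arguments C_adj : clear implicits.

Definition cart_adj (T1 T2 : finType) (r1 : rel T1) (r2 : rel T2) : rel (T1 * T2) :=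
  fun u v => ((u.1 == v.1) && r2 u.2 v.2) || ((u.2 == v.2) && r1 u.1 v.1).

Definition H_adj (t s : nat) : rel ('I_t * 'I_s) := cart_adj (K_adj t) (C_adj s).
Arguments H_adj : clear implicits.

(* Main.v *)
From HB Require Import structures.
Require Import Defs.
From mathcomp Require Import all_boot zify.
Set Implicit Arguments. Unset Strict Implicit. Unset Printing Implicit Defensive.

Lemma mod2 x s : x < s + s -> x %% s = if x < s then x else x - s.
Proof.
move=> h2; case: ltnP => h; first by rewrite modn_small.
rewrite -{1}(subnK h) modnDr modn_small //; lia.
Qed.

Definition sc s (hs : 0 < s) (k : 'I_s) : 'I_s := Ordinal (ltn_pmod k.+1 hs).

Lemma scE s (hs : 0 < s) (k : 'I_s) : (sc hs k : nat) = if k.+1 < s then k.+1 else 0.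
Proof. rewrite /= mod2; last by have := ltn_ord k; lia.
case: ltnP => //; have := ltn_ord k; lia. Qed.

Lemma Cadj_sc s (hs : 0 < s) (k j : 'I_s) : C_adj s k j = (j == sc hs k) || (k == sc hs j).
Proof. by []. Qed.

Lemma sc_neq s (hs : 0 < s) (k : 'I_s) : 2 < s -> sc hs k != k.
Proof. move=> h3; apply/eqP=> /(congr1 (@nat_of_ord _)); rewrite scE; have := ltn_ord k; case: (ltnP k.+1 s); lia. Qed.

Lemma sc_sc s (hs : 0 < s) (k : 'I_s) : 2 < s -> sc hs (sc hs k) != k.
Proof. move=> h3; apply/eqP=> /(congr1 (@nat_of_ord _)); rewrite !scE; have := ltn_ord k.
case: (ltnP k.+1 s) => h1 /=; [case: (ltnP k.+2 s)|case: (ltnP 1 s)]; lia. Qed.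

Lemma memE_gen (V : finType) (r : rel V) : symmetric r -> irreflexive r ->
  forall u v, ([set u; v] \in edges r) = r u v.
Proof.
move=> sy ir u v; apply/imsetP/idP => [[w]|h]; last first.
  by exists (u, v) => //; rewrite inE.
rewrite inE => hw e.
have hu : u \in [set w.1; w.2] by rewrite -e !inE eqxx.
have hv : v \in [set w.1; w.2] by rewrite -e !inE eqxx orbT.
have h1 : w.1 \in [set u; v] by rewrite e !inE eqxx.
have h2 : w.2 \in [set u; v] by rewrite e !inE eqxx orbT.
move: hu hv h1 h2; rewrite !inE => /orP[]/eqP-> /orP[]/eqP->.
- by move=> _ /orP[]/eqP e2; rewrite e2 ir in hw.
- by [].
- by rewrite sy.
- by move=> /orP[]/eqP e2; rewrite e2 ir in hw.
Qed.

Lemma Hadj_sym t s : symmetric (H_adj t s).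
Proof. move=> u v; rewrite /H_adj /cart_adj /K_adj /C_adj.
congr (_ || _); congr (_ && _); [exact: eq_sym|exact: orbC|exact: eq_sym|by rewrite eq_sym].
Qed.

Lemma Hadj_irr t s : 1 < s -> irreflexive (H_adj t s).
Proof. move=> hs u; rewrite /H_adj /cart_adj /K_adj /C_adj !eqxx /= orbF orbb.
have hu := ltn_ord u.2; apply: negbTE; apply/eqP; rewrite mod2; last by lia.
case: ltnP; lia. Qed.

Lemma memE t s u v : 1 < s -> ([set u; v] \in edges (H_adj t s)) = H_adj t s u v.
Proof. by move=> hs; apply: memE_gen; [apply: Hadj_sym|apply: Hadj_irr]. Qed.

Definition pc s (hs : 0 < s) (k : 'I_s) : 'I_s := Ordinal (ltn_pmod (k + s.-1) hs).

Lemma sc_pc s (hs : 0 < s) k : sc hs (pc hs k) = k.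
Proof. apply: val_inj => /=; have h := ltn_ord k.
rewrite -addn1 modnDml addn1 -addnS prednK // modnDr; exact: modn_small. Qed.

Lemma sc_inj s (hs : 0 < s) : injective (sc hs).
Proof. move=> a b /(congr1 (@nat_of_ord _)); rewrite !scE => e; apply: val_inj => /=.
have := ltn_ord a; have := ltn_ord b; move: e.
case: (ltnP a.+1 s); case: (ltnP b.+1 s); lia. Qed.

Lemma eq_sc s (hs : 0 < s) j k : (j == sc hs k) = (k == pc hs j).
Proof. by rewrite -{1}(sc_pc hs j) (inj_eq (@sc_inj s hs)) eq_sym. Qed.

Lemma regularH t s : 1 <= t -> 3 <= s -> regular (H_adj t s) t.+1.
Proof.
move=> ht hs x; have hs0 : 0 < s by lia.
have E : [set y | H_adj t s x y] =
  [set (x.1, sc hs0 x.2); (x.1, pc hs0 x.2)] :|: [set y | (y.2 == x.2) && (y.1 != x.1)].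
  apply/setP => -[a b]; rewrite !inE /H_adj /cart_adj /K_adj (Cadj_sc hs0) /= (eq_sc hs0 x.2 b).
  rewrite !xpair_eqE (eq_sym x.2) (eq_sym x.1); by case: (a == x.1); case: (b == x.2).
rewrite /degree E cardsU.
have -> : [set (x.1, sc hs0 x.2); (x.1, pc hs0 x.2)] :&: [set y | (y.2 == x.2) && (y.1 != x.1)] = set0.
  apply/setP => -[a b]; rewrite !inE !xpair_eqE.
  case: (a =P x.1) => [->|]; rewrite ?eqxx ?andbF //= andbT.
rewrite cards0 subn0 cards2.
have -> : (x.1, sc hs0 x.2) != (x.1, pc hs0 x.2).
  rewrite xpair_eqE eqxx /=; apply/eqP => e.
  by move: (sc_sc hs0 x.2); rewrite e sc_pc eqxx; lia.
have -> : [set y | (y.2 == x.2) && (y.1 != x.1)] = [set (i, x.2) | i in [set i | i != x.1]].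
  apply/setP => -[a b]; rewrite !inE /=; apply/idP/imsetP => [/andP[/eqP -> h]|[i]].
    by exists a; rewrite ?inE.
  by rewrite inE => h [-> ->]; rewrite eqxx.
rewrite card_imset; last by move=> i j [].
have -> : [set i | i != x.1] = [set~ x.1] by apply/setP=> i; rewrite !inE.
by rewrite cardsC1 card_ord; lia.
Qed.

Lemma modS x s : (x %% s).+1 %% s = x.+1 %% s.
Proof. by rewrite -(addn1 (x %% s)) modnDml addn1. Qed.

Lemma chain s (hs : 0 < s) (R : rel 'I_s) (k0 : 'I_s) :
  reflexive R -> symmetric R -> transitive R ->
  (forall k, k != k0 -> R k (sc hs k)) -> forall a b, R a b.
Proof.
move=> rf sy tr hst.
pose c n : 'I_s := Ordinal (ltn_pmod n hs).
have hk0 := ltn_ord k0.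
have cl : forall m, m < s -> R (c k0.+1) (c (k0.+1 + m)).
  elim=> [|m IH] hm; first by rewrite addn0 rf.
  apply: tr (IH (ltnW hm)) _.
  have -> : c (k0.+1 + m.+1) = sc hs (c (k0.+1 + m)).
    by apply: val_inj => /=; rewrite modS addnS.
  apply: hst; apply/eqP => /(congr1 (@nat_of_ord _)) /=.
  rewrite mod2; last by lia.
  by case: ltnP; lia.
have ca : forall a : 'I_s, R (c k0.+1) a.
  move=> a; have ha := ltn_ord a.
  case: (leqP k0.+1 a) => h.
    have := cl (a - k0.+1); rewrite subnKC //.
    have -> : c a = a by apply: val_inj => /=; rewrite modn_small.
    apply; lia.
  have := cl (a + s - k0.+1).
  have -> : k0.+1 + (a + s - k0.+1) = a + s by lia.
  have -> : c (a + s) = a by apply: val_inj => /=; rewrite modnDr modn_small.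
  apply; lia.
by move=> a b; apply: tr (ca b); rewrite sy.
Qed.

Lemma conn_closed (V : finType) (e : rel V) (S : pred V) x y :
  (forall a b, e a b -> S a -> S b) -> connect e x y -> S x -> S y.
Proof.
move=> cl /connectP[p pa ->]; elim: p x pa => [|z p IH] x //= /andP[exz pa] Sx.
exact: IH pa (cl _ _ exz Sx).
Qed.

Definition Gr (V : finType) (F : {set {set V}}) : rel V := fun a b => [set a; b] \in F.

Lemma Gr_sym (V : finType) (F : {set {set V}}) : symmetric (Gr F).
Proof. by move=> a b; rewrite /Gr setUC. Qed.

Lemma pickS (T : finType) (A Q : pred T) (P : T -> Prop) d :
  (exists v, A v && Q v) -> (forall v, A v -> Q v -> P v) -> P (odflt d [pick v | A v && Q v]).
Proof.
move=> [v hv] h; case: pickP => [w /andP[]|n] /=; first exact: h.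
by rewrite n in hv.
Qed.

Definition hedge t s (hs : 0 < s) (i : 'I_t) (k : 'I_s) : {set 'I_t * 'I_s} :=
  [set (i, k); (i, sc hs k)].

Lemma hedge_inj t s (hs : 0 < s) (i : 'I_t) k1 k2 : 2 < s -> hedge hs i k1 = hedge hs i k2 -> k1 = k2.
Proof.
move=> h3 e.
have h1 : (i, k1) \in hedge hs i k2 by rewrite -e !inE eqxx.
have h2 : (i, k2) \in hedge hs i k1 by rewrite e !inE eqxx.
move: h1 h2; rewrite !inE !xpair_eqE eqxx /=.
case/orP=> /eqP -> //; case/orP=> /eqP e2 //.
by move: (sc_sc hs k2 h3); rewrite -e2 eqxx.
Qed.

Lemma hedgeE t s (hs : 0 < s) (i : 'I_t) k : 1 < s -> hedge hs i k \in edges (H_adj t s).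
Proof. move=> h; rewrite /hedge memE // /H_adj /cart_adj /= eqxx /=.
by rewrite (Cadj_sc hs) eqxx. Qed.

Lemma hedge_other t s (hs : 0 < s) (i : 'I_t) k (p : 'I_t * 'I_s) : 2 < s ->
  exists v, (v \in hedge hs i k) && (v != p).
Proof.
move=> h3; case: (eqVneq (i, k) p) => [<-|ne]; last by exists (i, k); rewrite !inE eqxx.
exists (i, sc hs k); rewrite !inE eqxx orbT /= xpair_eqE eqxx /=; exact: sc_neq.
Qed.

Lemma conn_small t s (ht : 0 < t) (h3 : 2 < s) (hts : t < s)
  (F : {set {set 'I_t * 'I_s}}) :
  F \subset edges (H_adj t s) -> #|F| <= t -> connectedE (edges (H_adj t s) :\: F).
Proof.
move=> FE Ft.
have hs0 : 0 < s by lia.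
have hs1 : 1 < s by lia.
pose x0 : 'I_t * 'I_s := (Ordinal ht, Ordinal hs0).
pose R := connect (Gr (edges (H_adj t s) :\: F)).
have Rsym : forall a b, R a b = R b a by apply: sym_connect_sym; exact: Gr_sym.
have Rtr : forall a b c, R a b -> R b c -> R a c by move=> a b c; apply: connect_trans.
have edgeR : forall a b, H_adj t s a b -> [set a; b] \notin F -> R a b.
  by move=> a b hab hF; apply: connect1; rewrite /Gr inE hF memE.
have [j0 hj0] : exists j0, forall a b : 'I_t, [set (a, j0); (b, j0)] \notin F.
  case: (boolP [exists j0, [forall a, forall b, [set (a, j0); (b, j0)] \notin F]]).
    by case/existsP=> j0 /forallP h; exists j0 => a b; move/forallP: (h a); apply.
  rewrite negb_exists => /forallP hall.
  pose phi (e : {set 'I_t * 'I_s}) := (odflt x0 [pick v | (v \in e) && true]).2.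
  have sub : [set: 'I_s] \subset phi @: F.
    apply/subsetP => j _; move: (hall j); rewrite negb_forall => /existsP[a].
    rewrite negb_forall => /existsP[b]; rewrite negbK => hF.
    apply/imsetP; exists [set (a, j); (b, j)] => //.
    rewrite /phi; apply: (@pickS _ _ _ (fun v => j = v.2)).
      by exists (a, j); rewrite !inE eqxx.
    by move=> v; rewrite !inE => /orP[] /eqP ->.
  have := subset_leq_card sub; rewrite cardsT card_ord => h.
  exfalso; have := leq_trans h (leq_trans (leq_imset_card phi F) Ft); lia.
have col : forall a b, R (a, j0) (b, j0).
  move=> a b; case: (eqVneq a b) => [->|ne]; first exact: connect0.
  by apply: edgeR => //; rewrite /H_adj /cart_adj /K_adj /= eqxx ne orbT.
pose bad i := [exists k1, exists k2,
  (k1 != k2) && (hedge hs0 i k1 \in F) && (hedge hs0 i k2 \in F)].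
have good : forall i, ~~ bad i -> forall k, R (i, k) (i, j0).
  move=> i nb.
  have [ks hks] : exists ks, forall k, hedge hs0 i k \in F -> k = ks.
    case: (pickP (fun k => hedge hs0 i k \in F)) => [ks hks|none]; last first.
      by exists j0 => k; rewrite none.
    exists ks => k hk; apply/eqP/negPn/negP => ne; move/negP: nb; apply.
    by apply/existsP; exists k; apply/existsP; exists ks; rewrite ne hk hks.
  move=> k; apply: (@chain s hs0 (fun a b => R (i, a) (i, b)) ks).
  - by move=> a; exact: connect0.
  - by move=> a b; rewrite Rsym.
  - by move=> a b c; apply: Rtr.
  - move=> k' ne; apply: edgeR.
      by rewrite /H_adj /cart_adj /= eqxx (Cadj_sc hs0) eqxx.
    by apply/negP => /hks e; rewrite e eqxx in ne.
have badc : forall i j, bad i -> exists i', ~~ bad i' && ([set (i, j); (i', j)] \notin F).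
  move=> i j bi.
  case: (boolP [exists i', ~~ bad i' && ([set (i, j); (i', j)] \notin F)]) => [/existsP //|].
  rewrite negb_exists => /forallP hall; exfalso.
  case/existsP: (bi) => k1 /existsP[k2] /andP[/andP[ne hk1] hk2].
  pose e2 := hedge hs0 i k2.
  pose sig (e : {set 'I_t * 'I_s}) := (odflt x0 [pick v | (v \in e) && (v != (i, j))]).1.
  have sub : [set: 'I_t] \subset sig @: (F :\ e2).
    apply/subsetP => r _; apply/imsetP; case: (boolP (bad r)) => br.
      case/existsP: br => l1 /existsP[l2] /andP[/andP[nel hl1] hl2].
      have [l [hl hle2]] : exists l, hedge hs0 r l \in F /\ hedge hs0 r l != e2.
        case: (eqVneq (hedge hs0 r l1) e2) => e1; last by exists l1.
        exists l2; split => //; rewrite -e1; apply/negP => /eqP /(hedge_inj h3) e.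
        by rewrite e eqxx in nel.
      exists (hedge hs0 r l); first by rewrite !inE hle2.
      rewrite /sig; apply: (@pickS _ _ _ (fun v => r = v.1)); first exact: hedge_other.
      by move=> v; rewrite !inE => /orP[] /eqP ->.
    have hF := hall r; rewrite br /= negbK in hF.
    have rni : r != i by apply/negP => /eqP er; rewrite er bi in br.
    exists [set (i, j); (r, j)].
      rewrite !inE hF andbT; apply/negP => /eqP e.
      have : (r, j) \in e2 by rewrite -e !inE eqxx orbT.
      by rewrite !inE !xpair_eqE (negbTE rni).
    rewrite /sig; apply: (@pickS _ _ _ (fun v => r = v.1)).
      by exists (r, j); rewrite !inE eqxx orbT /= xpair_eqE (negbTE rni).
    by move=> v; rewrite !inE => /orP[] /eqP -> //; rewrite eqxx.
  have := subset_leq_card sub; rewrite cardsT card_ord => h.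
  have h5 := leq_trans h (leq_imset_card sig (F :\ e2)).
  have := cardsD1 e2 F; rewrite hk2 /= => h4; by move: Ft; rewrite h4 add1n ltnNge h5.
have toj0 : forall u, exists a, R u (a, j0).
  move=> [i j]; case: (boolP (bad i)) => bi; last by exists i; apply: good.
  have [i' /andP[gi' hF]] := badc i j bi; exists i'.
  apply: Rtr (good i' gi' j); apply: edgeR => //.
  rewrite /H_adj /cart_adj /K_adj /= eqxx /=.
  apply/orP; right; apply/negP => /eqP e; by move: gi'; rewrite -e bi.
apply/forallP => x; apply/forallP => y.
have [a ha] := toj0 x; have [b hb] := toj0 y.
have hxy : R x y by apply: (Rtr _ _ _ ha); apply: (Rtr _ _ _ (col a b)); rewrite Rsym.
exact: hxy.
Qed.

HB.instance Definition _ := SemiGroup.isComLaw.Build nat minn minnA minnC.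

Lemma conn_stuck (V : finType) (e : rel V) x y :
  (forall b, ~~ e x b) -> connect e x y -> y = x.
Proof.
move=> h /connectP[[|z p] pa ->] //=; move: pa => /= /andP[exz _].
by rewrite (negbTE (h z)) in exz.
Qed.

Lemma edge_conn t s : 1 <= t -> 3 <= s -> t < s -> edge_connectivity (H_adj t s) = t.+1.
Proof.
move=> ht h3 hts; have hs0 : 0 < s by lia.
have hs1 : 1 < s by lia.
set E := edges (H_adj t s).
pose x0 : 'I_t * 'I_s := (Ordinal ht, Ordinal hs0).
pose F0 := [set [set x0; y] | y in [set y | H_adj t s x0 y]].
have F0E : F0 \subset E.
  by apply/subsetP => e /imsetP[y]; rewrite inE => hy ->; rewrite memE.
have cF0 : #|F0| = t.+1.
  rewrite card_in_imset; first by have := regularH ht h3 x0; rewrite /degree.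
  move=> y1 y2; rewrite !inE => h1 h2 e.
  have : y1 \in [set x0; y2] by rewrite -e !inE eqxx orbT.
  rewrite !inE => /orP[/eqP ey|/eqP //]; by rewrite ey (Hadj_irr hs1 x0) in h1.
have dF0 : ~~ connectedE (E :\: F0).
  apply/negP => /forallP /(_ x0) /forallP /(_ (x0.1, sc hs0 x0.2)) /conn_stuck h.
  have ne : (x0.1, sc hs0 x0.2) <> x0.
    move/(congr1 snd) => /= /eqP; apply/negP; apply: sc_neq; lia.
  apply: ne; apply: h => b; rewrite /Gr !inE; apply/negP => /andP[nF]; rewrite memE // => hb.
  by move/negP: nF; apply; apply/imsetP; exists b; rewrite ?inE.
rewrite /edge_connectivity -/E; apply/eqP; rewrite eqn_leq; apply/andP; split.
  rewrite (bigD1 F0) /=; last by rewrite powersetE F0E.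
  by rewrite -cF0 geq_minl.
apply: (big_ind (fun n => t < n)).
- by rewrite -cF0 subset_leq_card.
- by move=> a b ha hb; rewrite leq_min ha hb.
move=> F /andP[]; rewrite powersetE => FE; apply: contraR; rewrite -leqNgt => Ft.
exact: conn_small.
Qed.

Lemma arc_step s (hs : 0 < s) (x : 'I_s) (j1 j2 : nat) :
  j1 < j2 -> j2 < s -> (x : nat) != j1 -> (x : nat) != j2 ->
  (j1 < x <= j2) = (j1 < sc hs x <= j2).
Proof.
move=> h12 h2 n1 n2; rewrite scE; have := ltn_ord x.
case: (ltnP x.+1 s) => h hx; last by rewrite ltn0; apply: negbTE; apply/negP => /andP[? ?]; lia.
apply/idP/idP => /andP[? ?]; apply/andP; split; lia.
Qed.

Lemma arc_closed t s (hs : 0 < s) (j1 j2 : 'I_s) (a b : 'I_t * 'I_s) :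
  j1 < j2 -> H_adj t s a b ->
  (forall i, [set a; b] != hedge hs i j1) -> (forall i, [set a; b] != hedge hs i j2) ->
  j1 < a.2 <= j2 -> j1 < b.2 <= j2.
Proof.
have hj2 := ltn_ord j2.
case: a b => [a1 a2] [b1 b2] /=; rewrite /H_adj /cart_adj /= (Cadj_sc hs) => h12.
case/orP=> [/andP[/eqP <- /orP[/eqP eb|/eqP ea]]|/andP[/eqP <- _]] n1 n2 //.
- have ne1 : (a2 : nat) != j1.
    apply/eqP => e; have e' : a2 = j1 by apply: val_inj.
    by move: (n1 a1); rewrite /hedge eb e' eqxx.
  have ne2 : (a2 : nat) != j2.
    apply/eqP => e; have e' : a2 = j2 by apply: val_inj.
    by move: (n2 a1); rewrite /hedge eb e' eqxx.
  by rewrite eb -arc_step.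
- have ne1 : (b2 : nat) != j1.
    apply/eqP => e; have e' : b2 = j1 by apply: val_inj.
    by move: (n1 a1); rewrite /hedge setUC ea e' eqxx.
  have ne2 : (b2 : nat) != j2.
    apply/eqP => e; have e' : b2 = j2 by apply: val_inj.
    by move: (n2 a1); rewrite /hedge setUC ea e' eqxx.
  by rewrite ea -arc_step // => ->.
Qed.

Lemma code_bound t s : 1 <= t -> 3 <= s -> (2 ^ t + 1) * 2 ^ (t - 1) < s ->
  m_code (H_adj t s) <= 2 ^ t.
Proof.
move=> ht h3 hs; have hs0 : 0 < s by lia.
have hs1 : 1 < s by lia.
set E := edges (H_adj t s).
apply/bigmax_leqP => C /andP[/forallP CE /forallP Cc].
rewrite leqNgt; apply/negP => hC.
have : exists C' : {set {set {set 'I_t * 'I_s}}}, (C' \subset C) && (#|C'| == (2 ^ t).+1).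
  move: (cards_draws C (2 ^ t).+1) => h0.
  have : 0 < 'C(#|C|, (2 ^ t).+1) by rewrite bin_gt0.
  by rewrite -h0 card_gt0 => /set0Pn[X]; rewrite inE => hX; exists X.
case=> C' /andP[C'C /eqP cC'].
pose cut (j : 'I_s) := [set hedge hs0 i j | i : 'I_t].
pose P (X : {set {set {set 'I_t * 'I_s}}}) j :=
  [forall A in X, forall B in X, A :&: cut j == B :&: cut j].
pose pairs := [set X : {set {set {set 'I_t * 'I_s}}} | X \subset C' & #|X| == 2].
have exP : forall j, exists X, (X \in pairs) && P X j.
  move=> j; pose f A := A :&: cut j.
  case: (boolP [exists A in C', exists B in C', (A != B) && (f A == f B)]).
    case/existsP=> A /andP[AC /existsP[B /andP[BC /andP[nAB /eqP fAB]]]].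
    exists [set A; B]; apply/andP; split.
      rewrite inE cards2 nAB andbT; apply/subsetP => Z; rewrite !inE.
      by case/orP=> /eqP ->.
    apply/forallP => Z; apply/implyP; rewrite !inE => hZ.
    apply/forallP => W; apply/implyP; rewrite !inE => hW.
    by case/orP: hZ => /eqP ->; case/orP: hW => /eqP ->; rewrite -/(f A) -/(f B) ?fAB.
  rewrite negb_exists => /forallP hn; exfalso.
  have inj : {in C' &, injective f}.
    move=> A B AC BC fAB; apply/eqP/negPn/negP => nAB.
    move/negP: (hn A); apply; rewrite AC /=; apply/existsP; exists B.
    by rewrite BC nAB fAB eqxx.
  have := card_in_imset inj; rewrite cC'.
  have sub : f @: C' \subset powerset (cut j).
    by apply/subsetP => Z /imsetP[A _ ->]; rewrite powersetE /f subsetIr.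
  have := subset_leq_card sub; rewrite card_powerset => h1 h2.
  have ct : #|cut j| <= t.
    by apply: leq_trans (leq_imset_card _ _) _; rewrite ?cardsT card_ord.
  have : 2 ^ #|cut j| <= 2 ^ t by rewrite leq_exp2l.
  rewrite h2 in h1; lia.
pose pr j := odflt set0 [pick X : {set {set {set 'I_t * 'I_s}}} | (X \in pairs) && P X j].
have prP : forall j, (pr j \in pairs) && P (pr j) j.
  by move=> j; apply: (@pickS _ _ _ (fun X => (X \in pairs) && P X j)) (exP j) _ => X -> ->.
have key : forall j1 j2 : 'I_s, j1 < j2 -> pr j1 = pr j2 -> False.
  move=> j1 j2 h12 e.
  case/andP: (prP j1); rewrite inE => /andP[XC /cards2P[A [B [nAB eX]]]] P1.
  case/andP: (prP j2) => _; rewrite -e => P2.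
  have AC : A \in C by apply: (subsetP C'C); apply: (subsetP XC); rewrite eX !inE eqxx.
  have BC : B \in C by apply: (subsetP C'C); apply: (subsetP XC); rewrite eX !inE eqxx orbT.
  pose D := (A :\: B) :|: (B :\: A).
  have cD : connectedE D.
    by move: (Cc A); rewrite AC /= => /forallP /(_ B); rewrite BC nAB.
  have Dcut : forall j, P (pr j1) j -> forall i, hedge hs0 i j \notin D.
    move=> j Pj i; apply/negP; rewrite !inE.
    have hAB : A :&: cut j = B :&: cut j.
      apply/eqP; move/forallP: Pj => /(_ A); rewrite eX !inE eqxx /= => /forallP /(_ B).
      by rewrite !inE eqxx orbT.
    have hc : hedge hs0 i j \in cut j by apply/imsetP; exists i.
    case/orP => /andP[nb ha].
      have : hedge hs0 i j \in A :&: cut j by rewrite inE ha hc.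
      by rewrite hAB inE (negbTE nb).
    have : hedge hs0 i j \in B :&: cut j by rewrite inE ha hc.
    by rewrite -hAB inE (negbTE nb).
  have DE : D \subset E.
    apply/subsetP => Z; rewrite !inE => /orP[] /andP[_ hZ].
      by have := CE A; rewrite AC /= => /subsetP; apply.
    by have := CE B; rewrite BC /= => /subsetP; apply.
  pose i0 : 'I_t := Ordinal ht.
  have hcon : connect (Gr D) (i0, j2) (i0, j1).
    by move/forallP: cD => /(_ (i0, j2)) /forallP /(_ (i0, j1)).
  have := @conn_closed _ (Gr D) (fun v : 'I_t * 'I_s => j1 < v.2 <= j2) _ _ _ hcon.
  rewrite /= ltnn leqnn h12 /= => H; have : false; last by []. apply: H => //.
  move=> a b; rewrite /Gr => hab; apply: (arc_closed (hs := hs0) (j1 := j1) (j2 := j2)) => //.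
  - by rewrite -memE //; apply: (subsetP DE).
  - by move=> i; apply/negP => /eqP ee; move: (Dcut j1 P1 i); rewrite -ee hab.
  - by move=> i; apply/negP => /eqP ee; move: (Dcut j2 P2 i); rewrite -ee hab.
case: (boolP [exists j1, exists j2, (j1 != j2) && (pr j1 == pr j2)]).
  case/existsP=> j1 /existsP[j2 /andP[ne /eqP e]].
  case: (ltngtP j1 j2) => h; first exact: key h e.
    exact: key h (esym e).
  by move: ne; rewrite (val_inj h) eqxx.
rewrite negb_exists => /forallP hn.
have inj : injective pr.
  move=> a b e; apply/eqP/negPn/negP => ne; move/negP: (hn a); apply.
  by apply/existsP; exists b; rewrite ne e eqxx.
have sub : pr @: [set: 'I_s] \subset pairs.
  by apply/subsetP => X /imsetP[j _ ->]; case/andP: (prP j).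
have := subset_leq_card sub; rewrite card_imset // cardsT card_ord.
rewrite /pairs cards_draws cC' bin2 /=.
have h2t : 2 ^ t = 2 * 2 ^ (t - 1) by rewrite -expnS; congr (2 ^ _); lia.
have -> : (2 ^ t).+1 * 2 ^ t = ((2 ^ t + 1) * 2 ^ (t - 1)).*2.
  rewrite -mul2n; nia.
rewrite doubleK; lia.
Qed.

Theorem proposition3p2 (t s : nat) :
  1 <= t -> 3 <= s -> (2 ^ t + 1) * 2 ^ (t - 1) < s ->
  [/\ regular (H_adj t s) t.+1,
      edge_connectivity (H_adj t s) = t.+1
    & m_code (H_adj t s) <= 2 ^ t].
Proof.
move=> ht hs hb; split; [exact: regularH | | exact: code_bound].
apply: edge_conn => //.
have : t < 2 ^ t by apply: ltn_expl.
have h2t : 2 ^ t = 2 * 2 ^ (t - 1) by rewrite -expnS; congr (2 ^ _); lia.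
have : 0 < 2 ^ (t - 1) by rewrite expn_gt0.
nia.
Qed.
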